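(* Let $G$ be a finite simple group. Then for every positive integer $n$ divisible by $|G|^2$, there exists $s\in G\backslash\operatorname{Sur}_1(F_n,G)$ such that the image in $S_n$ of the stabilizer of $s$ in $B_n$ contains an $n$-cycle.
   Context: $\operatorname{Sur}_1(F_n,G)$ is the set of $(g_1,\dots,g_n)\in G^n$ with $\langle g_1,\dots,g_n\rangle=G$ and $g_1\cdots g_n=1$; $G\backslash\operatorname{Sur}_1(F_n,G)$ is its set of orbits under simultaneous conjugation $(g_i)\mapsto(gg_ig^{-1})$. $B_n$ acts on it from the right via $(\dots,g_i,g_{i+1},\dots)^{\sigma_i}=(\dots,g_{i+1},g_{i+1}^{-1}g_ig_{i+1},\dots)$, and $B_n\to S_n$ sends $\sigma_i\mapsto(i\ i+1)$. *)

(* Defs.v *)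
From mathcomp Require Import all_boot all_fingroup all_solvable.
Set Implicit Arguments. Unset Strict Implicit. Unset Printing Implicit Defensive.
Import GroupScope.
Local Open Scope group_scope.

Section Hurwitz.
Variable gT : finGroupType.

(* Sur_1(F_n, G): tuples (g_1,...,g_n) (a seq of size n) generating G with g_1 ... g_n = 1 *)
Definition Sur1 (G : {group gT}) (n : nat) (t : seq gT) : Prop :=
  [/\ size t = n, <<[set x in t]>> = G & \prod_(x <- t) x = 1].

(* right action of the braid generator sigma_i (0-indexed: positions i, i+1):
   (.., g_i, g_{i+1}, ..) |-> (.., g_{i+1}, g_{i+1}^-1 g_i g_{i+1}, ..) *)
Definition sigma_act (i : nat) (t : seq gT) : seq gT :=
  [seq if j == i then nth 1 t i.+1
       else if j == i.+1 then (nth 1 t i) ^ (nth 1 t i.+1)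
       else nth 1 t j | j <- iota 0 (size t)].

Definition sigmaV_act (i : nat) (t : seq gT) : seq gT :=
  [seq if j == i then (nth 1 t i.+1) ^ (nth 1 t i)^-1
       else if j == i.+1 then nth 1 t i
       else nth 1 t j | j <- iota 0 (size t)].

End Hurwitz.

(* A braid in B_n is represented by a word in the generators sigma_i^{+-1};
   (i, false) stands for sigma_i and (i, true) for sigma_i^{-1}, 0 <= i, i+1 < n. *)
Definition braid_word := seq (nat * bool).

Definition valid_word (n : nat) (w : braid_word) : bool :=
  all (fun p => p.1.+1 < n) w.

Definition braid_act (gT : finGroupType) (w : braid_word) (t : seq gT) : seq gT :=
  foldl (fun s p => if p.2 then sigmaV_act p.1 s else sigma_act p.1 s) t w.

(* the transposition (i i+1) in S_n (identity if out of range) *)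
Definition adj_tperm (n i : nat) : 'S_n :=
  match @insub nat (fun k => k < n) 'I_n i, @insub nat (fun k => k < n) 'I_n i.+1 with
  | Some a, Some b => tperm a b
  | _, _ => 1
  end.

Definition braid_perm (n : nat) (w : braid_word) : 'S_n :=
  \prod_(p <- w) adj_tperm n p.1.

Definition is_ncycle (n : nat) (p : 'S_n) : Prop :=
  exists x : 'I_n, porbit p x = [set: 'I_n].

(* Main.v *)
Require Import Defs.
From mathcomp Require Import all_boot all_fingroup all_solvable.
Set Warnings "-notation-overridden".
From mathcomp Require Import zify.
Set Implicit Arguments. Unset Strict Implicit.

Section Helpers.
Local Open Scope group_scope.
Lemma sigma_cat (gT : finGroupType) (a : seq gT) u v c :
  sigma_act (size a) (a ++ u :: v :: c) = a ++ v :: u ^ v :: c.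
Proof.
apply: (@eq_from_nth _ 1).
  by rewrite size_map size_iota !size_cat.
move=> j; rewrite size_map size_iota => lt.
rewrite (nth_map 0) ?size_iota // nth_iota // add0n.
rewrite !nth_cat !ltnn !subnn /= ltnNge leqnSn /= subSn // subnn /=.
case: (ltngtP j (size a)) => hj.
- have -> : (j == (size a).+1) = false by lia.
  by [].
- case: eqP => hj2; first by rewrite hj2 subSn // subnn.
  by case E: (j - size a) => [|[|k]] //; lia.
- by rewrite hj subnn.
Qed.

Definition fw (s : seq nat) : braid_word := [seq (j, false) | j <- s].

Lemma braid_act_cat (gT : finGroupType) w1 w2 (t : seq gT) :
  braid_act (w1 ++ w2) t = braid_act w2 (braid_act w1 t).
Proof. by rewrite /braid_act foldl_cat. Qed.

Lemma prod_conj (gT : finGroupType) (B : seq gT) y :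
  \prod_(z <- [seq z ^ y | z <- B]) z = (\prod_(z <- B) z) ^ y.
Proof.
elim: B => [|b B IH]; first by rewrite !big_nil conj1g.
by rewrite /= !big_cons IH conjMg.
Qed.

Lemma move_right (gT : finGroupType) (B a c : seq gT) y :
  braid_act (fw (iota (size a) (size B))) (a ++ y :: B ++ c)
  = a ++ B ++ (y ^ \prod_(z <- B) z) :: c.
Proof.
elim: B a y => [|b B IH] a y /=; first by rewrite big_nil conjg1.
rewrite sigma_cat -cat_rcons.
have -> : (size a).+1 = size (rcons a b) by rewrite size_rcons.
by rewrite IH cat_rcons big_cons conjgM.
Qed.

Lemma move_left (gT : finGroupType) (B a c : seq gT) y :
  braid_act (fw (rev (iota (size a) (size B)))) (a ++ B ++ y :: c)
  = a ++ y :: [seq z ^ y | z <- B] ++ c.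
Proof.
elim/last_ind: B c => [|B b IH] c /=; first by [].
rewrite size_rcons -addn1 iotaD rev_cat /=.
rewrite -cats1 -catA /= catA.
have -> : size a + size B = size (a ++ B) by rewrite size_cat.
rewrite sigma_cat -catA IH map_cat /= -catA.
by [].
Qed.

Definition WR p L := fw (iota p L) ++ fw (rev (iota p L)).
Definition WL p L := fw (rev (iota p L)) ++ fw (iota p L).

Lemma conj_right (gT : finGroupType) (a B c : seq gT) y :
  \prod_(z <- B) z = 1 ->
  braid_act (WR (size a) (size B)) (a ++ y :: B ++ c)
  = a ++ y :: [seq z ^ y | z <- B] ++ c.
Proof.
move=> pB; rewrite /WR braid_act_cat move_right pB conjg1 move_left.
by [].
Qed.

Lemma conj_left (gT : finGroupType) (a B c : seq gT) y :
  \prod_(z <- B) z = 1 ->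
  braid_act (WL (size a) (size B)) (a ++ B ++ y :: c)
  = a ++ [seq z ^ y | z <- B] ++ y :: c.
Proof.
move=> pB; rewrite /WL braid_act_cat move_left.
rewrite -(size_map (fun z => z ^ y) B) move_right prod_conj pB conj1g conjg1.
by [].
Qed.

Lemma adj_tpermV n i : (adj_tperm n i)^-1 = adj_tperm n i.
Proof.
rewrite /adj_tperm.
case: insubP => [a _ _|_]; last by rewrite invg1.
case: insubP => [b _ _|_]; last by rewrite invg1.
by rewrite tpermV.
Qed.

Lemma braid_perm_cat n w1 w2 :
  braid_perm n (w1 ++ w2) = braid_perm n w1 * braid_perm n w2.
Proof. by rewrite /braid_perm big_cat. Qed.

Lemma braid_perm_fw n s : braid_perm n (fw s) = \prod_(j <- s) adj_tperm n j.
Proof. by rewrite /braid_perm big_map. Qed.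

Lemma prod_rev n s :
  \prod_(j <- rev s) adj_tperm n j = (\prod_(j <- s) adj_tperm n j)^-1.
Proof.
elim: s => [|x s IH]; first by rewrite !big_nil invg1.
by rewrite rev_cons -cats1 big_cat big_seq1 big_cons IH invMg adj_tpermV.
Qed.

Lemma perm_WR n p L : braid_perm n (WR p L) = 1.
Proof. by rewrite /WR braid_perm_cat !braid_perm_fw prod_rev mulgV. Qed.

Lemma perm_WL n p L : braid_perm n (WL p L) = 1.
Proof. by rewrite /WL braid_perm_cat !braid_perm_fw prod_rev mulVg. Qed.

Lemma valid_cat n w1 w2 : valid_word n (w1 ++ w2) = valid_word n w1 && valid_word n w2.
Proof. by rewrite /valid_word all_cat. Qed.

Lemma valid_fw n s : valid_word n (fw s) = all (fun j => j.+1 < n) s.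
Proof. by rewrite /valid_word all_map. Qed.

Lemma valid_iota n p L : p + L < n -> valid_word n (fw (iota p L)).
Proof.
move=> h; rewrite valid_fw; apply/allP => j; rewrite mem_iota => /andP[_ hj].
exact: leq_ltn_trans hj h.
Qed.

Lemma valid_WR n p L : p + L < n -> valid_word n (WR p L).
Proof.
move=> h; rewrite /WR valid_cat valid_iota // valid_fw all_rev -valid_fw.
exact: valid_iota.
Qed.

Lemma valid_WL n p L : p + L < n -> valid_word n (WL p L).
Proof.
move=> h; rewrite /WL valid_cat valid_iota // valid_fw all_rev -valid_fw.
by rewrite valid_iota.
Qed.

Definition Rch (gT : finGroupType) n (t t' : seq gT) :=
  exists w, [/\ valid_word n w, braid_perm n w = 1 & braid_act w t = t'].

Lemma Rch_refl (gT : finGroupType) n (t : seq gT) : Rch n t t.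
Proof. by exists [::]; split; rewrite // /braid_perm big_nil. Qed.

Lemma Rch_trans (gT : finGroupType) n (t1 t2 t3 : seq gT) :
  Rch n t1 t2 -> Rch n t2 t3 -> Rch n t1 t3.
Proof.
move=> [w1 [v1 p1 a1]] [w2 [v2 p2 a2]]; exists (w1 ++ w2); split.
- by rewrite valid_cat v1 v2.
- by rewrite braid_perm_cat p1 p2 mulg1.
- by rewrite braid_act_cat a1 a2.
Qed.

Lemma Rch_R (gT : finGroupType) n (a B c : seq gT) y :
  size (a ++ y :: B ++ c) = n -> \prod_(z <- B) z = 1 ->
  Rch n (a ++ y :: B ++ c) (a ++ y :: [seq z ^ y | z <- B] ++ c).
Proof.
move=> hs pB; exists (WR (size a) (size B)); split.
- apply: valid_WR; move: hs; rewrite !size_cat /= size_cat; lia.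
- exact: perm_WR.
- exact: conj_right.
Qed.

Lemma Rch_L (gT : finGroupType) n (a B c : seq gT) y :
  size (a ++ B ++ y :: c) = n -> \prod_(z <- B) z = 1 ->
  Rch n (a ++ B ++ y :: c) (a ++ [seq z ^ y | z <- B] ++ y :: c).
Proof.
move=> hs pB; exists (WL (size a) (size B)); split.
- apply: valid_WL; move: hs; rewrite !size_cat /= ?size_cat; lia.
- exact: perm_WL.
- exact: conj_left.
Qed.

Lemma map_conj1 (gT : finGroupType) (B : seq gT) : [seq z ^ 1 | z <- B] = B.
Proof. by rewrite (eq_map (@conjg1 _)) map_id. Qed.

Lemma map_conjM (gT : finGroupType) (B : seq gT) y1 y2 :
  [seq z ^ y2 | z <- [seq z ^ y1 | z <- B]] = [seq z ^ (y1 * y2) | z <- B].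
Proof. by rewrite -map_comp; apply: eq_map => z /=; rewrite conjgM. Qed.

Lemma Rch_RN (gT : finGroupType) n (a B c : seq gT) y j :
  size (a ++ y :: B ++ c) = n -> \prod_(z <- B) z = 1 ->
  Rch n (a ++ y :: B ++ c) (a ++ y :: [seq z ^ (y ^+ j) | z <- B] ++ c).
Proof.
move=> hs pB; elim: j => [|j IH]; first by rewrite expg0 map_conj1; exact: Rch_refl.
apply: (Rch_trans IH); rewrite expgSr -map_conjM; apply: Rch_R.
- by move: hs; rewrite !size_cat /= !size_cat size_map.
- by rewrite prod_conj pB conj1g.
Qed.

Lemma Rch_LN (gT : finGroupType) n (a B c : seq gT) y j :
  size (a ++ B ++ y :: c) = n -> \prod_(z <- B) z = 1 ->
  Rch n (a ++ B ++ y :: c) (a ++ [seq z ^ (y ^+ j) | z <- B] ++ y :: c).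
Proof.
move=> hs pB; elim: j => [|j IH]; first by rewrite expg0 map_conj1; exact: Rch_refl.
apply: (Rch_trans IH); rewrite expgSr -map_conjM; apply: Rch_L.
- by move: hs; rewrite !size_cat /= size_map.
- by rewrite prod_conj pB conj1g.
Qed.

Section Runs.
Variable gT : finGroupType.
Variable m : nat.
Implicit Types (d : seq gT) (y v : gT).

Definition flat d := flatten [seq nseq m v | v <- d].

Lemma flat_cat d1 d2 : flat (d1 ++ d2) = flat d1 ++ flat d2.
Proof. by rewrite /flat map_cat flatten_cat. Qed.

Lemma flat_cons v d : flat (v :: d) = nseq m v ++ flat d.
Proof. by []. Qed.

Lemma size_flat d : size (flat d) = (size d * m)%N.
Proof. by elim: d => [|v d IH] //=; rewrite size_cat size_nseq IH mulSn. Qed.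

Lemma prod_nseq v k : \prod_(z <- nseq k v) z = v ^+ k.
Proof. by elim: k => [|k IH]; rewrite ?big_nil ?expg0 // big_cons IH expgS. Qed.

Lemma prod_flat d : (forall v, v \in d -> v ^+ m = 1) -> \prod_(z <- flat d) z = 1.
Proof.
elim: d => [|v d IH] H; first by rewrite big_nil.
rewrite flat_cons big_cat prod_nseq H ?mem_head // IH.
  by rewrite /= mul1g.
by move=> z hz; apply: H; rewrite inE hz orbT.
Qed.

Lemma map_conj_nseq k v y : [seq z ^ y | z <- nseq k v] = nseq k (v ^ y).
Proof. by elim: k => //= k ->. Qed.

Lemma map_conj_flat d y : [seq z ^ y | z <- flat d] = flat [seq z ^ y | z <- d].
Proof. by elim: d => [|v d IH] //=; rewrite map_cat IH map_conj_nseq. Qed.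

Lemma nseqSr k y : nseq k.+1 y = nseq k y ++ [:: y].
Proof. by elim: k => //= k <-. Qed.

Hypothesis m_gt0 : 0 < m.

Lemma nseqm y : nseq m y = nseq m.-1 y ++ [:: y].
Proof. by rewrite -nseqSr prednK. Qed.

Lemma nseqm' y : nseq m y = y :: nseq m.-1 y.
Proof. by rewrite -[in LHS](prednK m_gt0). Qed.

Lemma expm y : y * y ^+ m.-1 = y ^+ m.
Proof. by rewrite -expgS prednK. Qed.

Lemma conj_run_R n d1 d2 d3 y v :
  (size (d1 ++ y :: d2 ++ v :: d3) * m)%N = n ->
  y ^+ m = 1 -> v ^+ m = 1 -> (forall z, z \in d2 -> z ^+ m = 1) ->
  Rch n (flat (d1 ++ y :: d2 ++ v :: d3)) (flat (d1 ++ y :: d2 ++ v ^ y :: d3)).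
Proof.
move=> hn hy hv hd2.
have E1 : flat (d1 ++ y :: d2 ++ v :: d3) =
  (flat d1 ++ nseq m.-1 y) ++ y :: (flat d2 ++ nseq m v) ++ flat d3.
  by rewrite !(flat_cat, flat_cons) nseqm -!catA.
have E2 : flat (d1 ++ y :: d2 ++ v ^ y :: d3) =
  (flat d1 ++ nseq m.-1 y) ++ y :: [seq z ^ (y ^+ m.-1) | z <- [seq z ^ y | z <- flat d2]]
     ++ (nseq m (v ^ y) ++ flat d3).
  rewrite map_conjM expm hy map_conj1.
  by rewrite !(flat_cat, flat_cons) nseqm -!catA.
have hs : size (flat (d1 ++ y :: d2 ++ v :: d3)) = n by rewrite size_flat.
rewrite E1 in hs; rewrite E1 E2; eapply Rch_trans; first apply: Rch_R.
- exact: hs.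
- by rewrite big_cat /= prod_flat // prod_nseq hv mulg1.
rewrite map_cat map_conj_nseq -[X in _ :: X]catA.
apply: Rch_RN.
- by rewrite -hs !size_cat /= !size_cat size_map !size_nseq addnA.
- by rewrite prod_conj prod_flat // conj1g.
Qed.

Lemma conj_run_L n d1 d2 d3 y v :
  (size (d1 ++ v :: d2 ++ y :: d3) * m)%N = n ->
  y ^+ m = 1 -> v ^+ m = 1 -> (forall z, z \in d2 -> z ^+ m = 1) ->
  Rch n (flat (d1 ++ v :: d2 ++ y :: d3)) (flat (d1 ++ v ^ y :: d2 ++ y :: d3)).
Proof.
move=> hn hy hv hd2.
have E1 : flat (d1 ++ v :: d2 ++ y :: d3) =
  flat d1 ++ (nseq m v ++ flat d2) ++ y :: (nseq m.-1 y ++ flat d3).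
  by rewrite !(flat_cat, flat_cons) (nseqm' y) -!catA.
have E2 : flat (d1 ++ v ^ y :: d2 ++ y :: d3) =
  (flat d1 ++ nseq m (v ^ y)) ++ [seq z ^ (y ^+ m.-1) | z <- [seq z ^ y | z <- flat d2]]
     ++ y :: (nseq m.-1 y ++ flat d3).
  rewrite map_conjM expm hy map_conj1.
  by rewrite !(flat_cat, flat_cons) (nseqm' y) -!catA.
have hs : size (flat (d1 ++ v :: d2 ++ y :: d3)) = n by rewrite size_flat.
rewrite E1 in hs; rewrite E1 E2; eapply Rch_trans; first apply: Rch_L.
- exact: hs.
- by rewrite big_cat /= prod_flat // prod_nseq hv mul1g.
rewrite map_cat map_conj_nseq.
have -> : flat d1 ++ (nseq m (v ^ y) ++ [seq z ^ y | z <- flat d2]) ++ y :: nseq m.-1 y ++ flat d3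
  = (flat d1 ++ nseq m (v ^ y)) ++ [seq z ^ y | z <- flat d2] ++ y :: nseq m.-1 y ++ flat d3.
  by rewrite !catA.
apply: Rch_LN.
- by rewrite -hs !size_cat /= !size_cat size_map !size_nseq; lia.
- by rewrite (prod_conj (flat d2) y) prod_flat // conj1g.
Qed.
End Runs.

Lemma set_nth_cat (T : Type) (x0 : T) s1 x s2 y :
  set_nth x0 (s1 ++ x :: s2) (size s1) y = s1 ++ y :: s2.
Proof. by elim: s1 => //= a s1 ->. Qed.

Lemma split2 (T : Type) (x0 : T) (s : seq T) i j :
  i < j -> j < size s ->
  exists s1 s2 s3, [/\ s = s1 ++ nth x0 s i :: s2 ++ nth x0 s j :: s3,
                      size s1 = i & (size s1 + (size s2).+1)%N = j].
Proof.
move=> ij js.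
exists (take i s), (take (j - i.+1) (drop i.+1 s)), (drop j.+1 s).
have is_ : i < size s by apply: ltn_trans js.
have hsz : size (take (j - i.+1) (drop i.+1 s)) = j - i.+1.
  by rewrite size_take size_drop; case: ltnP => //; lia.
split.
- rewrite -{1}(cat_take_drop i s); congr (_ ++ _).
  rewrite (drop_nth x0 is_); congr (_ :: _).
  rewrite -{1}(cat_take_drop (j - i.+1) (drop i.+1 s)); congr (_ ++ _).
  rewrite (drop_nth x0); last by rewrite size_drop; lia.
  rewrite nth_drop drop_drop; congr (nth _ _ _ :: drop _ _); lia.
- by rewrite size_take is_.
- by rewrite size_take is_ hsz; lia.
Qed.

Section Idx.
Variable gT : finGroupType.
Variable m : nat.
Hypothesis m_gt0 : 0 < m.

Lemma conj_idx n (d : seq gT) i u :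
  i < size d -> u < size d -> i != u -> (size d * m)%N = n ->
  (forall v, v \in d -> v ^+ m = 1) ->
  Rch n (flat m d) (flat m (set_nth 1 d i (nth 1 d i ^ nth 1 d u))).
Proof.
move=> id ud iu hn hd.
have hx : nth 1 d i ^+ m = 1 by apply: hd; apply: mem_nth.
have hy : nth 1 d u ^+ m = 1 by apply: hd; apply: mem_nth.
case: (ltngtP i u) iu => // h _.
- have [s1 [s2 [s3 [E hs1 _]]]] := split2 1 h ud.
  set x := nth 1 d i in E hx *; set y := nth 1 d u in E hy *.
  rewrite E -hs1 set_nth_cat.
  apply: conj_run_L => //.
  + by rewrite -E.
  + by move=> z hz; apply: hd; rewrite E mem_cat inE mem_cat hz !orbT.
- have [s1 [s2 [s3 [E hs1 hs2]]]] := split2 1 h id.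
  set x := nth 1 d i in E hx *; set y := nth 1 d u in E hy *.
  rewrite E.
  have -> : set_nth 1 (s1 ++ y :: s2 ++ x :: s3) i (x ^ y) =
            s1 ++ y :: s2 ++ (x ^ y) :: s3.
    rewrite (_ : s1 ++ _ :: s2 ++ _ :: s3 = (s1 ++ y :: s2) ++ x :: s3);
      last by rewrite -catA.
    rewrite (_ : i = size (s1 ++ y :: s2)); last by rewrite size_cat.
    by rewrite set_nth_cat -catA.
  apply: conj_run_R => //.
  + by rewrite -E.
  + by move=> z hz; apply: hd; rewrite E mem_cat inE mem_cat hz !orbT.
Qed.

Lemma set_nth_id (T : Type) (x0 : T) (s : seq T) i :
  i < size s -> set_nth x0 s i (nth x0 s i) = s.
Proof. by move=> h; rewrite set_nthE h -drop_nth // cat_take_drop. Qed.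

Lemma mem_set_nth_ (T : eqType) (x0 : T) (s : seq T) i w v :
  i < size s -> v \in set_nth x0 s i w -> (v \in s) \/ v = w.
Proof.
move=> h; rewrite set_nthE h mem_cat inE => /orP[/mem_take|/orP[/eqP|/mem_drop]];
  by [left | right | left].
Qed.

Lemma conj_list n cs : forall (d : seq gT) i,
  i < size d -> (size d * m)%N = n ->
  (forall v, v \in d -> v ^+ m = 1) ->
  (forall c, c \in cs -> exists u, [/\ u < size d, u != i & nth 1 d u = c]) ->
  Rch n (flat m d) (flat m (set_nth 1 d i (nth 1 d i ^ \prod_(c <- cs) c))).
Proof.
elim: cs => [|c cs IH] d i id hn hd hcs.
  by rewrite big_nil conjg1 set_nth_id //; apply: Rch_refl.
have [u [ud ui <-]] := hcs c (mem_head _ _).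
have sz1 : size (set_nth 1 d i (nth 1 d i ^ nth 1 d u)) = size d.
  by rewrite size_set_nth; apply/maxn_idPr.
have iu : i != u by rewrite eq_sym.
eapply Rch_trans; first exact: (conj_idx id ud iu hn hd).
have := IH (set_nth 1 d i (nth 1 d i ^ nth 1 d u)) i.
rewrite sz1 nth_set_nth /= eqxx set_set_nth eqxx big_cons conjgM.
apply => //.
- move=> v /(mem_set_nth_ id) [/hd //|->].
  by rewrite -conjXg hd ?mem_nth // conj1g.
- move=> c' hc'; have [u' [u'd u'i hu']] := hcs c' (mem_behead (s := c :: cs) hc').
  by exists u'; rewrite nth_set_nth /= (negbTE u'i).
Qed.

Lemma conj_gen n (d : seq gT) i (S : {set gT}) h :
  i < size d -> (size d * m)%N = n ->
  (forall v, v \in d -> v ^+ m = 1) ->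
  (forall c, c \in S -> exists u, [/\ u < size d, u != i & nth 1 d u = c]) ->
  h \in <<S>> ->
  Rch n (flat m d) (flat m (set_nth 1 d i (nth 1 d i ^ h))).
Proof.
move=> id hn hd hS /gen_prodgP [L [c hc ->]].
have -> : \prod_(l < L) c l = \prod_(z <- [seq c l | l <- index_enum 'I_L]) z.
  by rewrite big_map.
apply: conj_list => // z /mapP [l _ ->]; exact: hS.
Qed.

Lemma reach n (d d' : seq gT) :
  size d' = size d -> (size d * m)%N = n ->
  (forall v, v \in d -> v ^+ m = 1) ->
  (forall v, v \in d' -> v ^+ m = 1) ->
  (forall i, i < size d -> exists2 h,
     h \in <<[set nth 1 d (nat_of_ord u) | u : 'I_(size d) in [pred u : 'I_(size d) | (nth 1 d u == nth 1 d' u) && (val u != i)]]>>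
     & nth 1 d' i = nth 1 d i ^ h) ->
  Rch n (flat m d) (flat m d').
Proof.
move=> hsz hn hd hd' H.
suff : forall p, p <= size d -> Rch n (flat m d) (flat m (take p d' ++ drop p d)).
  by move/(_ (size d) (leqnn _)); rewrite drop_size cats0 -hsz take_size.
elim=> [|p IH] hp; first by rewrite take0 drop0; apply: Rch_refl.
have hp' : p < size d by [].
apply: Rch_trans (IH (ltnW hp)) _.
have [h hh e'] := H p hp'.
set e := take p d' ++ drop p d.
have hsp : size (take p d') = p by rewrite size_take hsz hp'.
have Ee : e = take p d' ++ nth 1 d p :: drop p.+1 d by rewrite /e (drop_nth 1).
have nep : nth 1 e p = nth 1 d p by rewrite Ee nth_cat hsp ltnn subnn.
have sze : size e = size d by rewrite /e size_cat size_take size_drop hsz hp'; lia.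
have -> : take p.+1 d' ++ drop p.+1 d = set_nth 1 e p (nth 1 e p ^ h).
  rewrite nep -e' Ee -[X in set_nth _ _ X _]hsp set_nth_cat (take_nth 1); last by rewrite hsz.
  by rewrite cat_rcons.
apply: (conj_gen _ _ _ _ hh).
- by rewrite sze.
- by rewrite sze.
- move=> v; rewrite /e mem_cat => /orP[/mem_take/hd' //|/mem_drop/hd //].
- move=> c /imsetP [u]; rewrite inE => /andP [/eqP du up] ->.
  exists u; rewrite sze ltn_ord; split => //.
  rewrite /e nth_cat hsp; case: ltnP => hu.
    by rewrite nth_take // du.
  by rewrite nth_drop subnKC.
Qed.
End Idx.


Lemma adj_tpermE n L (z : 'I_n) : L.+1 < n ->
  val (adj_tperm n L z) = if val z == L then L.+1 else if val z == L.+1 then L else val z.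
Proof.
move=> hL; rewrite /adj_tperm.
have h1 : L < n by apply: ltnW.
rewrite (insubT (fun k => k < n) h1) (insubT (fun k => k < n) hL).
set a : 'I_n := Sub L h1; set b : 'I_n := Sub L.+1 hL.
have va : val a = L by [].
have vb : val b = L.+1 by [].
case: tpermP => [->|->|ha hb].
- by rewrite va vb eqxx.
- by rewrite va vb eqxx; case: eqP => //; lia.
- have e1 : (val z == L) = false.
    by apply/negbTE/eqP => e; apply: ha; apply: val_inj; rewrite e va.
  have e2 : (val z == L.+1) = false.
    by apply/negbTE/eqP => e; apply: hb; apply: val_inj; rewrite e vb.
  by rewrite e1 e2.
Qed.

Lemma prefix_perm n L (x : 'I_n) : L < n ->
  val ((\prod_(j <- iota 0 L) adj_tperm n j) x) =
  if val x == 0 then L else if val x <= L then (val x).-1 else val x.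
Proof.
elim: L => [|L IH] hL.
  rewrite big_nil perm1; case: eqP => [->//|]; by case: (val x).
rewrite -addn1 iotaD big_cat big_seq1 permM adj_tpermE; last by rewrite add0n ?addn1.
rewrite IH; last by apply: ltn_trans hL.
rewrite add0n ?addn1.
case: (val x) => [|k]; first by rewrite /= eqxx.
rewrite /=.
case: (ltngtP k.+1 L) => h;
  repeat (case: eqP => ?); repeat (case: ifP => ?); lia.
Qed.

Section Cyc.
Variables n m k : nat.
Hypothesis m_gt0 : 0 < m.
Hypothesis k_gt1 : 1 < k.
Hypothesis nkm : n = (k * m)%N.

Lemma m_lt_n : m < n.
Proof. by rewrite nkm -{1}(mul1n m) ltn_pmul2r. Qed.

Definition dperm : 'S_n := \prod_(j <- iota 0 n.-1) adj_tperm n j.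
Definition qperm : 'S_n := \prod_(j <- iota 0 m.-1) adj_tperm n j.

Lemma dpermE (x : 'I_n) : val (dperm x) = (val x + n.-1) %% n.
Proof.
have hn : n.-1 < n by have := m_lt_n; lia.
rewrite /dperm prefix_perm //.
case: x => [[|r] hr] /=.
  by rewrite add0n modn_small.
rewrite ifT; last lia.
rewrite (_ : r.+1 + n.-1 = r + n); last lia.
rewrite modnDr modn_small //; lia.
Qed.

Lemma dpermX j (x : 'I_n) : val ((dperm ^+ j) x) = (val x + n.-1 * j) %% n.
Proof.
elim: j => [|j IH]; first by rewrite expg0 perm1 muln0 addn0 modn_small ?ltn_ord.
rewrite expgSr permM dpermE IH modnDml mulnS; congr (_ %% _); lia.
Qed.

Lemma qpermE (y : 'I_n) :
  val (qperm y) = if val y == 0 then m.-1 else if val y <= m.-1 then (val y).-1 else val y.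
Proof. rewrite /qperm prefix_perm //; have := m_lt_n; lia. Qed.

Definition pp : 'S_n := dperm ^+ (n - m) * qperm.

Lemma ppE (y : 'I_n) :
  val (pp y) = let r := (val y + m) %% n in
     if r == 0 then m.-1 else if r <= m.-1 then r.-1 else r.
Proof.
rewrite /pp permM qpermE dpermX.
have -> : (val y + n.-1 * (n - m)) %% n = (val y + m) %% n.
  have hmn := m_lt_n.
  have [q Eq] : exists q, n = (m + q.+1)%N by exists (n - m).-1; lia.
  have -> : n.-1 = (m + q)%N by lia.
  have -> : n - m = q.+1 by lia.
  have E2 : (q * n = q * (m + q.+1))%N by rewrite -Eq.
  have -> : (val y + (m + q) * q.+1 = (val y + m) + q * n)%N by rewrite E2; nia.
  by rewrite addnC modnMDl.
by [].
Qed.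

Lemma pp_step (y : 'I_n) o b : o < m -> b < k -> val y = (o + b * m)%N ->
  val (pp y) = if b.+1 < k then (o + b.+1 * m)%N else if o == 0 then m.-1 else o.-1.
Proof.
move=> om bk hy; rewrite ppE hy /=.
case: (ltnP b.+1 k) => hb.
  rewrite modn_small; last by rewrite nkm; nia.
  rewrite ifF; last by nia.
  by rewrite ifF //; nia.
have hbk : b.+1 = k by lia.
have -> : (o + b * m + m = o + 1 * n)%N by rewrite nkm -hbk; nia.
rewrite addnC modnMDl modn_small; last by have := m_lt_n; lia.
by case: eqP => // _; rewrite ifT //; lia.
Qed.

Definition gg a b := ((if a == 0 then 0 else m - a) + b * m)%N.

Lemma pp_orbit (x0 : 'I_n) a b : val x0 = 0 -> a < m -> b < k ->
  val ((pp ^+ (a * k + b)) x0) = gg a b.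
Proof.
move=> h0; elim: a b => [|a IHa] b ha.
  elim: b => [|b IHb] hb.
    by rewrite mul0n addn0 expg0 perm1 h0 /gg.
  have hy : val ((pp ^+ b) x0) = (0 + b * m)%N.
    by have := IHb (ltnW hb); rewrite mul0n add0n /gg.
  rewrite mul0n add0n expgSr permM (pp_step m_gt0 (ltnW hb) hy) hb.
  by rewrite /gg.
have ha' : a < m by lia.
elim: b => [|b IHb] hb.
  have -> : ((a.+1 * k + 0) = (a * k + k.-1).+1)%N by rewrite mulSn; lia.
  have hk : k.-1 < k by lia.
  have ho : (if a == 0 then 0 else m - a) < m by case: eqP; lia.
  have hy : val ((pp ^+ (a * k + k.-1)) x0) = ((if a == 0 then 0 else m - a) + k.-1 * m)%N.
    by rewrite IHa // /gg.
  rewrite expgSr permM (pp_step ho hk hy) ifF; last by lia.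
  rewrite /gg; case: (eqVneq a 0) => [->|a0] /=; rewrite mul0n addn0.
    by rewrite subn1.
  by repeat (case: eqP => ?); repeat (case: ifP => ?); lia.
have -> : (a.+1 * k + b.+1 = (a.+1 * k + b).+1)%N by lia.
have ho : (if a.+1 == 0 then 0 else m - a.+1) < m by rewrite /=; lia.
have hy : val ((pp ^+ (a.+1 * k + b)) x0) = ((if a.+1 == 0 then 0 else m - a.+1) + b * m)%N.
  by rewrite IHb ?(ltnW hb) // /gg.
by rewrite expgSr permM (pp_step ho (ltnW hb) hy) hb /gg.
Qed.

Lemma pp_ncycle : is_ncycle pp.
Proof.
have hn := m_lt_n.
have x0p : 0 < n by lia.
exists (Ordinal x0p); apply/setP => z; rewrite inE.
have hz : val z < k * m by rewrite -nkm ltn_ord.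
set o := (val z %% m); set b := (val z %/ m).
have ob : val z = (o + b * m)%N by rewrite /o /b addnC -divn_eq.
have hb : b < k by rewrite /b ltn_divLR.
have ho : o < m by rewrite /o ltn_mod.
set a := if o == 0 then 0 else m - o.
have ha : a < m by rewrite /a; case: eqP; lia.
have := mem_porbit pp (a * k + b) (Ordinal x0p).
suff -> : (pp ^+ (a * k + b)) (Ordinal x0p) = z by [].
apply: val_inj; rewrite pp_orbit // ob /gg /a.
by case: (eqVneq o 0) => [->|h] //=; rewrite ifF; [lia|apply/eqP; lia].
Qed.
End Cyc.

Section Main.
Local Open Scope group_scope.
Variable gT : finGroupType.

Lemma prod_rot j (t : seq gT) : \prod_(z <- t) z = 1 -> \prod_(z <- seq.rot j t) z = 1.
Proof.
rewrite /seq.rot -{1}(cat_take_drop j t) !big_cat /= => h.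
by rewrite -(mulKg (\prod_(z <- take j t) z) (\prod_(z <- drop j t) z)) h mulg1 mulVg.
Qed.

Lemma delta_act (t : seq gT) : 0 < size t -> \prod_(z <- t) z = 1 ->
  braid_act (fw (iota 0 (size t).-1)) t = seq.rot 1 t.
Proof.
case: t => [//|y B] _ /= h.
have := move_right B [::] [::] y; rewrite /= cats0 => ->.
rewrite rot1_cons -cats1; congr (_ ++ [:: _]).
rewrite big_cons in h.
have -> : \prod_(z <- B) z = y^-1 by rewrite -(mulKg y (\prod_(z <- B) z)) h mulg1.
by rewrite conjgE invgK mulgV mulg1.
Qed.

Lemma deltaN_act n j (t : seq gT) : size t = n -> 0 < n -> \prod_(z <- t) z = 1 ->
  braid_act (flatten (nseq j (fw (iota 0 n.-1)))) t = iter j (seq.rot 1) t.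
Proof.
elim: j t => [|j IH] t hs hn hp //=.
rewrite braid_act_cat -hs delta_act ?hs // IH ?size_rot ?prod_rot //.
by rewrite -iterS iterSr.
Qed.

Lemma iter_rot j (t : seq gT) : j <= size t -> iter j (seq.rot 1) t = seq.rot j t.
Proof.
elim: j => [|j IH] h; first by rewrite rot0.
by rewrite iterS IH ?(ltnW h) // -rotD // add1n.
Qed.

Lemma conj_self_pow (v : gT) j : v ^ (v ^+ j) = v.
Proof. by rewrite conjgE -expgS expgSr mulgA mulVg mul1g. Qed.

Lemma q_act m v (r : seq gT) : 0 < m ->
  braid_act (fw (iota 0 m.-1)) (nseq m v ++ r) = nseq m v ++ r.
Proof.
move=> hm.
have E : nseq m v = v :: nseq m.-1 v by rewrite -(prednK hm).
have := move_right (nseq m.-1 v) [::] r v; rewrite size_nseq /= prod_nseq conj_self_pow.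
rewrite E /= => ->.
by rewrite -[v :: r]cat1s catA -nseqSr.
Qed.

Lemma perm_deltaN n j :
  braid_perm n (flatten (nseq j (fw (iota 0 n.-1)))) = (dperm n) ^+ j.
Proof.
elim: j => [|j IH]; first by rewrite /braid_perm big_nil expg0.
by rewrite /= braid_perm_cat IH braid_perm_fw expgS.
Qed.

Lemma valid_deltaN n j : 0 < n -> valid_word n (flatten (nseq j (fw (iota 0 n.-1)))).
Proof.
move=> hn; elim: j => [|j IH] //=.
by rewrite valid_cat IH valid_iota //; lia.
Qed.

Lemma nth_flat_nseq (E : seq gT) e q : 0 < e -> q < size E * e ->
  nth 1 (flatten [seq nseq e v | v <- E]) q = nth 1 E (q %/ e).
Proof.
move=> he; elim: E q => [|v E IH] q //= hq.
rewrite nth_cat size_nseq; case: ltnP => h.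
  by rewrite nth_nseq h divn_small.
rewrite IH; last by move: hq; rewrite mulSn; lia.
have -> : q %/ e = ((q - e) %/ e).+1.
  by rewrite -{1}(subnK h) divnDr ?dvdnn // divnn he addn1.
by [].
Qed.

Lemma mem_flat_nseq (E : seq gT) e z : 0 < e ->
  (z \in flatten [seq nseq e v | v <- E]) = (z \in E).
Proof.
move=> he; elim: E => [|v E IH] //=.
by rewrite mem_cat IH mem_nseq he inE.
Qed.

End Main.

Lemma nth_rot1 (T : Type) (x0 : T) (s : seq T) u :
  u.+1 < size s -> nth x0 (seq.rot 1 s) u = nth x0 s u.+1.
Proof.
case: s => [//|a s] /= h; rewrite rot1_cons nth_rcons.
by rewrite ifT //.
Qed.


End Helpers.

Unset Implicit Arguments.
Theorem corollary4p46 (gT : finGroupType) (G : {group gT}) :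
  simple G ->
  forall n : nat, 0 < n -> (#|G| ^ 2 %| n)%N ->
  exists t : seq gT,
    Sur1 G n t /\
    exists w : braid_word,
      [/\ valid_word n w,
          (exists2 g, g \in G & braid_act w t = [seq (x ^ g)%g | x : gT <- t])
        & is_ncycle (braid_perm n w)].
Proof.
move=> /simpleP [ntG simG] n n_gt0 dvd.
have [x xG x1] := trivgPn _ ntG.
set m := #|G|.
have m_gt1 : 1 < m by rewrite cardG_gt1.
have m_gt0 : 0 < m by lia.
set C := (x ^: G)%g.
have CG : C \subset G by rewrite class_subG.
have xC : x \in C by apply: class_refl.
have genC : <<C>>%g = G.
  have nC : (<<C>> <| G)%g.
    by rewrite /normal gen_subG CG (subset_trans (class_norm x G) (norm_gen _)).
  case: (simG <<C>>%G nC) => [h|h]; last by have /= := congr1 val h.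
  have : x \in <<C>>%G by apply: mem_gen.
  rewrite h inE => /eqP x1'.
  by rewrite x1' eqxx in x1.
set s := #|C|.
have s_dvd : (s %| m)%N by rewrite /s -index_cent1 dvdn_indexg.
have s_gt0 : 0 < s by rewrite /s card_gt0; apply/set0Pn; exists x.
have s_lt : s < m.
  apply: proper_card; apply/properP; split; first exact: CG.
  exists 1%g; first exact: group1.
  apply/negP; move/imsetP => [g _ e]; move: x1; rewrite -(conjg_eq1 x g) -e.
  by rewrite eqxx.
set q := m %/ s.
have mq : m = (q * s)%N by rewrite divnK.
have q_gt1 : 1 < q by move: s_lt; rewrite mq; nia.
set c := n %/ (m ^ 2).
have nc : n = (c * m ^ 2)%N by rewrite divnK.
have c_gt0 : 0 < c by move: n_gt0; rewrite nc; nia.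
set k := (m * c)%N.
set e := (q * c)%N.
have e_gt1 : 1 < e by rewrite /e; nia.
have nkm : n = (k * m)%N by rewrite nc /k; nia.
have k_gt1 : 1 < k by rewrite /k; nia.
have mn : m < n by rewrite nkm -{1}(mul1n m) ltn_pmul2r.
set E := enum C.
have sE : size E = s by rewrite /E /s cardE.
set d := flat e E.
have ke : k = (s * e)%N by rewrite /k /e mq mulnCA mulnA.
have sd : size d = k by rewrite /d size_flat sE ke.
set t := flat m d.
have st : size t = n by rewrite /t size_flat sd nkm.
have dG : forall v, v \in d -> v \in C.
  by move=> v; rewrite /d /flat mem_flat_nseq ?mem_enum //; lia.
have dm : forall v, v \in d -> (v ^+ m = 1)%g.
  by move=> v /dG vC; apply: expg_cardG; apply: (subsetP CG).
have pt : (\prod_(z <- t) z = 1)%g by apply: prod_flat.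
set d' := seq.rot 1 d.
have Rd : Rch n (flat m d) (flat m d').
  apply: (reach m_gt0).
  - by rewrite size_rot.
  - by rewrite sd nkm.
  - exact: dm.
  - by move=> v; rewrite mem_rot; apply: dm.
  move=> i hi.
  case: (eqVneq (nth 1%g d' i) (nth 1%g d i)) => [eq|ne].
    by exists 1%g; [exact: group1 | rewrite conjg1].
  have di : nth 1%g d i \in C by apply: dG; apply: mem_nth.
  have di' : nth 1%g d' i \in C by apply: dG; rewrite -(mem_rot 1); apply: mem_nth; rewrite size_rot.
  move: di di' => /imsetP [g1 g1G ->] /imsetP [g2 g2G ->].
  exists (g1^-1 * g2)%g; last by rewrite -conjgM mulKVg.
  have hG : (g1^-1 * g2 \in G)%g by rewrite groupM ?groupV.
  rewrite -genC in hG; apply: (subsetP (genS _)) hG.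
  apply/subsetP => z zC.
  have zE : z \in E by rewrite /E mem_enum.
  set j := index z E.
  have hj : j < s by rewrite -sE index_mem.
  set u := (j * e)%N.
  have e0 : 0 < e by apply: ltnW.
  have hle : (j.+1 * e <= s * e)%N by rewrite leq_pmul2r.
  have hu1' : u.+1 < s * e.
    rewrite mulSn in hle; apply: leq_trans hle.
    by rewrite /u addnC -addn2 leq_add2l.
  have hu' : u < s * e by apply: ltnW.
  have hu : u < size d by rewrite sd ke.
  have hu1 : u.+1 < size d by rewrite sd ke.
  have nu : nth 1%g d u = z.
    rewrite /d /flat nth_flat_nseq ?sE //.
    by rewrite /u mulnK ?nth_index.
  have nu' : nth 1%g d' u = z.
    rewrite nth_rot1 // /d /flat nth_flat_nseq ?sE //.
    rewrite /u -addn1 (divnDl _ (dvdn_mull j (dvdnn e))) (mulnK _ e0).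
    by rewrite divn_small // addn0 nth_index.
  apply/imsetP; exists (Ordinal hu) => //.
  rewrite inE /= nu nu' eqxx /=.
  by apply/eqP => ui; move: ne; rewrite -ui nu nu' eqxx.
have ft : flat m d' = seq.rot m t.
  case Ed : d sd => [|v d0] sd'; first by move: k_gt1; rewrite -sd'.
  rewrite /d' /t Ed rot1_cons -cats1 flat_cat !flat_cons /= cats0.
  by have := rot_size_cat (nseq m v) (flat m d0); rewrite size_nseq.
have [P [vP pP aP]] := Rd.
exists t; split.
  split => //; rewrite -genC; congr (<<_>>%g); apply/setP => z.
  by rewrite inE /t /flat mem_flat_nseq // /d /flat mem_flat_nseq ?mem_enum //; lia.
exists (P ++ flatten (nseq (n - m) (fw (iota 0 n.-1))) ++ fw (iota 0 m.-1)); split.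
- rewrite !valid_cat vP valid_deltaN // valid_iota //.
  by rewrite add0n (leq_ltn_trans (leq_pred m) mn).
- exists 1%g; first exact: group1.
  rewrite map_conj1 !braid_act_cat aP ft.
  rewrite deltaN_act ?size_rot ?prod_rot //.
  rewrite iter_rot; last by rewrite size_rot st leq_subr.
  rewrite -rotD; last by rewrite subnK ?st // ltnW.
  rewrite subnK; last by rewrite ltnW.
  rewrite -st rot_size.
  case Ed : d sd => [|v d0] sd'; first by move: k_gt1; rewrite -sd'.
  by rewrite /t Ed flat_cons q_act.
- rewrite !braid_perm_cat pP perm_deltaN braid_perm_fw mul1g.
  exact: (pp_ncycle m_gt0 k_gt1 nkm).
Qed.
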